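(* Consider the $T$-round online first-price auction problem and the AR-Prod policy described in the context, and assume $V_T=o(T)$. (i) If $V_T$ is known, restarting the Prod forecaster with translation $\mu_t=\max\{v_t-m_t,0\}$ every $\Delta_T$ rounds, with constant batch size $\Delta_T$ of order $\sqrt{T/V_T}$, achieves expected dynamic regret $\tilde{O}(\sqrt{TV_T})$ over all sequences in $\mathcal{V}$. (ii) If $V_T$ is unknown, the AR-Prod policy satisfies \[ \sup_{(v_t,m_t)_{t=1}^T\in\mathcal{V}}\mathbb{E}[\mathrm{DR}_T(\pi)]=\tilde{O}\left(\max\left\{\sqrt{TV_T},1\right\}\right). \]
   Context: Online first-price auction over $T$ rounds: at each round $t$ the learner observes a private value $v_t\in[0,1]$, submits a bid $b_t\in[0,1]$ (possibly randomized, depending only on past $(v_s,m_s)_{s<t}$ and $v_t$), then observes $m_t\in[0,1]$, the highest bid of the other bidders, and receives reward $r(b_t;v_t,m_t)$ with $r(b;v,m)\coloneqq(v-b)\mathbbm{1}(b\ge m)$. The expected dynamic regret is $\mathbb{E}[\mathrm{DR}_T(\pi)]\coloneqq\sum_{t=1}^T\max\{v_t-m_t,0\}-\sum_{t=1}^T\mathbb{E}[r(b_t;v_t,m_t)]$. For $V_T\ge0$, $\mathcal{V}\coloneqq\{(v_t,m_t)_{t=1}^T\in[0,1]^{2T}:\sum_{t=2}^T|m_t-m_{t-1}|\le V_T\}$. $\tilde{O}(\cdot)$ hides polylogarithmic factors in $T$. Prod forecaster: fix a precision $\epsilon$ and $N=1/\epsilon$ experts; expert $i\in\{1,\dots,N\}$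 bids $\min\{v_t,i\epsilon\}$ and has reward $r_{t,i}\coloneqq r(\min\{v_t,i\epsilon\};v_t,m_t)$. Starting from $p=(1/N,\dots,1/N)$, at round $t$ the bid $\min\{v_t,i\epsilon\}$ is chosen with probability $p_{t,i}$, and after observing $m_t$ the weights are updated as $p_{t+1,i}=\frac{(1+\eta(r_{t,i}-\mu_t))p_{t,i}}{\sum_{k=1}^N(1+\eta(r_{t,k}-\mu_t))p_{t,k}}$ with $\mu_t=\max\{v_t-m_t,0\}$. AR-Prod policy: set $\eta=\frac12$, $\epsilon=\frac1T$, $c=\frac1T$. Time is split into consecutive batches $\mathcal{T}_1,\mathcal{T}_2,\dots$; at the first round of each batch the Prod forecaster is restarted (weights reset to uniform). For the current batch $j$, let $\Delta_{T,j}$ be its current length and $V_{T,j}$ the temporal variation $\sum|m_t-m_{t-1}|$ of the opponents' highest bids over consecutive rounds within batch $j$ observed so far, with $V_{T,i}$ for $i<j$ the variations of completed batches. After each round of batch $j$ the quantities are updated, and batch $j$ continues as long as $\Delta_{T,j}<\sqrt{T/(\sum_{i=1}^jV_{T,i}+c)}$; otherwise a new batch begins at the next round. *)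

(* Defs.v *)
From HB Require Import structures.
From mathcomp Require Import all_boot all_order all_algebra.
From mathcomp Require Import reals exp.
Set Implicit Arguments. Unset Strict Implicit. Unset Printing Implicit Defensive.
Import Order.TTheory GRing.Theory Num.Theory.
Local Open Scope ring_scope.

(* Rounds are indexed t = 0, ..., T-1 (round t here is round t+1 of the paper).
   Experts are indexed i = 1, ..., N, with precision eps = 1/N. *)

Definition reward {R : realType} (b v m : R) : R := if m <= b then v - b else 0.

Definition opt_reward {R : realType} (v m : R) : R := Num.max (v - m) 0.

Definition expert_bid {R : realType} (N i : nat) (v : R) : R :=
  Num.min v (i%:R / N%:R).

Definition expert_reward {R : realType} (N i : nat) (v m : R) : R :=
  reward (expert_bid N i v) v m.

Definition prod_update {R : realType} (N : nat) (eta : R) (p : nat -> R) (v m : R)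
  : nat -> R :=
  fun i =>
    let g j := 1 + eta * (expert_reward N j v m - opt_reward v m) in
    g i * p i / \sum_(1 <= k < N.+1) g k * p k.

Definition uniform {R : realType} (N : nat) : nat -> R := fun _ => N%:R^-1.

Fixpoint prod_weights {R : realType} (N : nat) (eta : R) (v m : nat -> R)
  (restart : nat -> bool) (t : nat) : nat -> R :=
  match t with
  | 0 => uniform N
  | t'.+1 => if restart t then uniform N
             else prod_update N eta (prod_weights N eta v m restart t') (v t') (m t')
  end.

(* Expected reward at round t: the bid min{v_t, i eps} is played with
   probability p_{t,i}; the weights are deterministic given the sequence. *)
Definition exp_reward_t {R : realType} (N : nat) (eta : R) (v m : nat -> R)
  (restart : nat -> bool) (t : nat) : R :=
  \sum_(1 <= i < N.+1) prod_weights N eta v m restart t i * expert_reward N i (v t) (m t).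

Definition exp_dyn_regret {R : realType} (T N : nat) (eta : R) (v m : nat -> R)
  (restart : nat -> bool) : R :=
  \sum_(t < T) opt_reward (v t) (m t) - \sum_(t < T) exp_reward_t N eta v m restart t.

Definition in_class {R : realType} (VT : R) (T : nat) (v m : nat -> R) : Prop :=
  (forall t, (t < T)%N -> (0 <= v t <= 1) /\ (0 <= m t <= 1)) /\
  \sum_(1 <= t < T) `|m t - m t.-1| <= VT.

Definition fixed_restart (Delta : nat) : nat -> bool := fun t => (t %% Delta == 0)%N.

(* AR-Prod batch state at the START of round t:
   (current batch length, variation within current batch, sum of variations
   of completed batches).  Current length 0 means round t starts a new batch. *)
Fixpoint ar_state {R : realType} (T : nat) (m : nat -> R) (t : nat) : nat * R * R :=
  match t with
  | 0 => (0%N, 0, 0)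
  | t'.+1 =>
      let: (L, Vc, Vp) := ar_state T m t' in
      let Vc' := if L == 0%N then Vc else Vc + `|m t' - m t'.-1| in
      if (L.+1)%:R < Num.sqrt (T%:R / (Vp + Vc' + T%:R^-1))
      then (L.+1, Vc', Vp)
      else (0%N, 0, Vp + Vc')
  end.

Definition ar_restart {R : realType} (T : nat) (m : nat -> R) : nat -> bool :=
  fun t => ((ar_state T m t).1.1 == 0)%N.

(* Expected dynamic regret of AR-Prod (eta = 1/2, eps = 1/T so N = T, c = 1/T) *)
Definition ar_prod_regret {R : realType} (T : nat) (v m : nat -> R) : R :=
  exp_dyn_regret T T (2^-1) v m (ar_restart T m).

(* Expected dynamic regret of Prod (eta = 1/2, eps = 1/T) restarted every Delta rounds *)
Definition restarted_prod_regret {R : realType} (T Delta : nat) (v m : nat -> R) : R :=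
  exp_dyn_regret T T (2^-1) v m (fixed_restart Delta).

(* Main.v *)
Require Import Defs.
From HB Require Import structures.
From mathcomp Require Import all_boot all_order all_algebra.
From mathcomp Require Import reals exp.
From mathcomp Require Import ring lra zify.
Import Order.TTheory GRing.Theory Num.Theory.
Local Open Scope ring_scope.
Definition xr {R : realType} N i (v m : R) := expert_reward N i v m - opt_reward v m.

Lemma min_facts {R : realType} (a b : R) : Num.min a b <= a /\ Num.min a b <= b /\ (Num.min a b = a \/ Num.min a b = b).
Proof. rewrite /Num.min; case: ifP => h; lra. Qed.
Lemma max_facts {R : realType} (a b : R) : a <= Num.max a b /\ b <= Num.max a b /\ (Num.max a b = a \/ Num.max a b = b).
Proof. rewrite /Num.max; case: ifP => h; try lra. Qed.

Lemma xr_range {R : realType} N i (v m : R) : 0 <= v <= 1 -> 0 <= m <= 1 ->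
  -1 <= xr N i v m <= 0.
Proof.
move=> /andP[v0 v1] /andP[m0 m1].
rewrite /xr /expert_reward /reward /opt_reward /expert_bid.
have hq : 0 <= (i%:R / N%:R : R) by rewrite divr_ge0 // ler0n.
have [h1 [h2 h3]] := min_facts v (i%:R / N%:R).
have [k1 [k2 k3]] := max_facts (v - m) 0.
case: ifP => hm; apply/andP; split; case: h3 => h3; case: k3 => k3; rewrite ?h3 ?k3 in hm *; lra.
Qed.

Lemma xr_cmp {R : realType} N c (v m : R) : 0 <= v <= 1 -> 0 <= m -> m <= c%:R / N%:R ->
  - xr N c v m <= c%:R / N%:R - m.
Proof.
move=> /andP[v0 v1] m0 mL.
rewrite /xr /expert_reward /reward /opt_reward /expert_bid.
have [h1 [h2 h3]] := min_facts v (c%:R / N%:R).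
have [k1 [k2 k3]] := max_facts (v - m) 0.
case: ifP => hm; case: h3 => h3; case: k3 => k3; rewrite ?h3 ?k3 in hm *; try lra.
all: move/negbT: hm; rewrite -ltNge => hm; lra.
Qed.

Lemma Er_mu {R : realType} N (p : nat -> R) v m :
  \sum_(1 <= k < N.+1) p k = 1 ->
  \sum_(1 <= k < N.+1) p k * expert_reward N k v m - opt_reward v m =
  \sum_(1 <= k < N.+1) p k * xr N k v m.
Proof.
move=> hs; rewrite -[X in _ - X]mul1r -hs mulr_suml -sumrB.
by apply: eq_bigr => k _; rewrite /xr; ring.
Qed.

Lemma Er_mu_range {R : realType} N (p : nat -> R) v m :
  0 <= v <= 1 -> 0 <= m <= 1 ->
  (forall i, (1 <= i <= N)%N -> 0 < p i) ->
  \sum_(1 <= k < N.+1) p k = 1 ->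
  -1 <= \sum_(1 <= k < N.+1) p k * expert_reward N k v m - opt_reward v m <= 0.
Proof.
move=> hv hm hp hs; rewrite Er_mu //; apply/andP; split.
- rewrite -hs -sumrN; apply: ler_sum_nat => k /andP[k1 k2].
  have := xr_range N k v m hv hm; have := hp k; rewrite k1 /= -ltnS k2 => /(_ isT) h.
  move=> /andP[a b]; nra.
- apply: le_trans (_ : _ <= \sum_(1 <= k < N.+1) (0:R)) _; last by rewrite big1_eq.
  apply: ler_sum_nat => k /andP[k1 k2].
  have := xr_range N k v m hv hm; have := hp k; rewrite k1 /= -ltnS k2 => /(_ isT) h.
  move=> /andP[a b]; nra.
Qed.

Lemma G_eq {R : realType} N (eta : R) (p : nat -> R) v m :
  \sum_(1 <= k < N.+1) p k = 1 ->
  \sum_(1 <= k < N.+1) (1 + eta * (expert_reward N k v m - opt_reward v m)) * p k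
  = 1 + eta * (\sum_(1 <= k < N.+1) p k * expert_reward N k v m - opt_reward v m).
Proof.
move=> hs; rewrite Er_mu // -[in RHS]hs mulr_sumr -big_split /=.
by apply: eq_bigr => k _; rewrite /xr; ring.
Qed.

Definition data_ok {R : realType} (T : nat) (v m : nat -> R) :=
  forall t, (t < T)%N -> (0 <= v t <= 1) /\ (0 <= m t <= 1).

Lemma uniform_ok {R : realType} N : (0 < N)%N ->
  (forall i, (1 <= i <= N)%N -> 0 < (uniform N i : R)) /\
  \sum_(1 <= i < N.+1) (uniform N i : R) = 1.
Proof.
move=> hN; rewrite /uniform; split.
- by move=> i _; rewrite invr_gt0 ltr0n.
- by rewrite sumr_const_nat subn1 /= -[_ *+ N]mulr_natr mulVf // pnatr_eq0 -lt0n.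
Qed.

Lemma weights_inv {R : realType} N (v m : nat -> R) rs T t :
  (0 < N)%N -> data_ok T v m -> (t <= T)%N ->
  (forall i, (1 <= i <= N)%N -> 0 < prod_weights N (2^-1) v m rs t i) /\
  \sum_(1 <= i < N.+1) prod_weights N (2^-1) v m rs t i = 1.
Proof.
move=> hN hd; elim: t => [|t IH] ht; first exact: uniform_ok.
rewrite /=; case: (rs t.+1); first exact: uniform_ok.
have [hp hs] := IH (ltnW ht).
have [hv hm] := hd t ht.
set p := prod_weights N (2^-1) v m rs t.
have hE := Er_mu_range N p (v t) (m t) hv hm hp hs.
have hG := G_eq N (2^-1) p (v t) (m t) hs.
rewrite /prod_update /=.
set G := \sum_(1 <= k < N.+1) _.
have Gpos : 0 < G by rewrite /G hG; move: hE; set z := (_ - _); move=> /andP[a b]; lra.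
split.
- move=> i hi; apply: divr_gt0 => //; apply: mulr_gt0; last exact: hp.
  have := xr_range N i (v t) (m t) hv hm; rewrite /xr; move=> /andP[a b]; lra.
- by rewrite -mulr_suml mulfV // gt_eqF.
Qed.

Lemma p_le1 {R : realType} N (p : nat -> R) c : (1 <= c <= N)%N ->
  (forall i, (1 <= i <= N)%N -> 0 < p i) -> \sum_(1 <= k < N.+1) p k = 1 -> p c <= 1.
Proof.
move=> hc hp hs; rewrite -hs (bigD1_seq c) /=; last exact: iota_uniq.
- rewrite lerDl big_seq_cond; apply: sumr_ge0 => i /andP[hi _].
  by apply/ltW/hp; rewrite mem_index_iota ltnS in hi.
- by rewrite mem_index_iota ltnS.
Qed.

Lemma pw_restart {R : realType} N (eta : R) v m (rs : nat -> bool) s : (s = 0%N \/ rs s) ->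
  prod_weights N eta v m rs s = uniform N.
Proof. by case: s => [//|s] [//|/= ->]. Qed.

Lemma ln_le_sub1 {R : realType} (y : R) : 0 < y -> ln y <= y - 1.
Proof. by move=> hy; have := @le_ln1Dx R (y - 1); rewrite addrCA subrr addr0; apply; lra. Qed.

Lemma step_ineq {R : realType} N (v m : nat -> R) rs T t c :
  (0 < N)%N -> data_ok T v m -> (t < T)%N -> ~~ rs t.+1 -> (1 <= c <= N)%N ->
  2^-1 * (opt_reward (v t) (m t) - exp_reward_t N (2^-1) v m rs t) <=
  ln (prod_weights N (2^-1) v m rs t.+1 c) - ln (prod_weights N (2^-1) v m rs t c)
  - xr N c (v t) (m t).
Proof.
move=> hN hd ht hr hc.
have [hp hs] := weights_inv N v m rs T t hN hd (ltnW ht).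
have [hv hm] := hd t ht.
set p := prod_weights N (2^-1) v m rs t.
have hE := Er_mu_range N p (v t) (m t) hv hm hp hs.
have hG := G_eq N (2^-1) p (v t) (m t) hs.
rewrite /= (negbTE hr) /prod_update /= -/p.
rewrite /exp_reward_t -/p.
set G := \sum_(1 <= k < N.+1) _ in hG *.
set E := \sum_(1 <= k < N.+1) _ in hE hG *.
set g := 1 + _.
have hx := xr_range N c (v t) (m t) hv hm.
have gE : g = 1 + 2^-1 * xr N c (v t) (m t) by [].
have gpos : 0 < g by rewrite gE; move: hx => /andP[a b]; lra.
have Gpos : 0 < G by rewrite hG; move: hE => /andP[a b]; lra.
have ppos : 0 < p c by apply: hp.
rewrite ln_div ?posrE ?mulr_gt0 // lnM ?posrE //.
have h1 : ln G <= G - 1 by apply: ln_le_sub1.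
have h2 : - ln g <= - xr N c (v t) (m t).
  have -> : - ln g = ln g^-1 by rewrite lnV ?posrE.
  have h3 : ln g^-1 <= g^-1 - 1 by apply: ln_le_sub1; rewrite invr_gt0.
  have : g^-1 <= 1 - xr N c (v t) (m t).
    rewrite -[g^-1]mul1r ler_pdivrMr // gE; move: hx => /andP[a b]; nra.
  lra.
lra.
Qed.

Lemma regret_round_le1 {R : realType} N (v m : nat -> R) (rs : nat -> bool) T t :
  (0 < N)%N -> data_ok T v m -> (t < T)%N ->
  opt_reward (v t) (m t) - exp_reward_t N (2^-1) v m rs t <= 1.
Proof.
move=> hN hd ht.
have [hp hs] := weights_inv N v m rs T t hN hd (ltnW ht).
have [hv hm] := hd t ht.
have := Er_mu_range N _ (v t) (m t) hv hm hp hs.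
rewrite /exp_reward_t => /andP[a b]; lra.
Qed.

Lemma batch_prod {R : realType} N (v m : nat -> R) (rs : nat -> bool) T s e c :
  (0 < N)%N -> data_ok T v m -> (s < e)%N -> (e <= T)%N -> (s = 0%N \/ rs s) ->
  (forall t, (s < t < e)%N -> ~~ rs t) -> (1 <= c <= N)%N ->
  \sum_(s <= t < e) (opt_reward (v t) (m t) - exp_reward_t N (2^-1) v m rs t)
  <= 2 * ln N%:R + 1 + 2 * \sum_(s <= t < e.-1) (- xr N c (v t) (m t)).
Proof.
move=> hN hd hse heT hs hnr hc.
set f := fun t => opt_reward (v t) (m t) - exp_reward_t N (2^-1) v m rs t.
set pw := prod_weights N (2^-1) v m rs.
have claim : forall k, (s + k < e)%N ->
  2^-1 * \sum_(s <= t < (s + k)%N) f t <=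
  ln (pw (s + k)%N c) + ln N%:R + \sum_(s <= t < (s + k)%N) (- xr N c (v t) (m t)).
  elim=> [|k IH] hk.
  - rewrite !addn0 !big_geq // /pw (pw_restart N (2^-1) v m rs s hs) /uniform /=.
    have -> : ln (N%:R^-1 : R) = - ln N%:R by apply: lnV; rewrite posrE ltr0n.
    lra.
  - have hk' : (s + k < e)%N by lia.
    have := IH hk'.
    have := step_ineq N v m rs T (s + k) c hN hd ltac:(lia) (hnr (s + k).+1 ltac:(lia)) hc.
    rewrite addnS !big_nat_recr /= ?leq_addr // -/pw /f.
    set a := \sum_(s <= i < s + k) _.
    set b := \sum_(s <= i < s + k) _.
    move=> h1 h2; lra.
have he : e = (e.-1).+1 by lia.
have h2 := claim (e.-1 - s)%N ltac:(lia).
rewrite subnKC in h2; last by lia.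
have [hp hsum] := weights_inv N v m rs T e.-1 hN hd ltac:(lia).
have hl : ln (pw e.-1 c) <= 0 by apply: ln_le0; exact: (p_le1 N _ c hc hp hsum).
have h1 := regret_round_le1 N v m rs T e.-1 hN hd ltac:(lia).
rewrite [in X in X <= _]he big_nat_recr /=; last by lia.
rewrite -/f in h1 *.
set a := \sum_(s <= i < e.-1) _ in h2 *.
set b := \sum_(s <= i < e.-1) _ in h2 *.
lra.
Qed.

Lemma telesc {R : realType} (m : nat -> R) s k :
  `|m (s + k)%N - m s| <= \sum_(s.+1 <= w < (s + k).+1) `|m w - m w.-1|.
Proof.
elim: k => [|k IH]; first by rewrite addn0 subrr normr0 big_geq.
rewrite addnS big_nat_recr /=; last by lia.
apply: le_trans (ler_distD (m (s + k)%N) _ _) _.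
by rewrite addrC lerD2l.
Qed.

Lemma sum_mono_hi {R : realType} (F : nat -> R) a b c : (b <= c)%N ->
  (forall i, 0 <= F i) -> \sum_(a <= i < b) F i <= \sum_(a <= i < c) F i.
Proof.
move=> hbc hF; case: (leqP a b) => hab.
- rewrite (big_cat_nat hab hbc) /= lerDl; exact: sumr_ge0.
- rewrite big_geq; last by lia.
  exact: sumr_ge0.
Qed.

Lemma sum_mono_lo {R : realType} (F : nat -> R) a b c : (a <= b)%N ->
  (forall i, 0 <= F i) -> \sum_(b <= i < c) F i <= \sum_(a <= i < c) F i.
Proof.
move=> hab hF; case: (leqP b c) => hbc.
- rewrite (big_cat_nat hab hbc) /= lerDr; exact: sumr_ge0.
- rewrite big_geq; last by lia.
  exact: sumr_ge0.
Qed.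

Lemma level_idx {R : realType} N (M : R) : (0 < N)%N -> 0 <= M ->
  exists c, [/\ (1 <= c <= N)%N, M <= c%:R / N%:R \/ c = N & c%:R / N%:R <= M + N%:R^-1].
Proof.
move=> hN hM.
have hN' : (0 : R) < N%:R by rewrite ltr0n.
have hMN : 0 <= M * N%:R by apply: mulr_ge0 => //; exact: ltW.
have [h1 h2] := andP (truncn_itv hMN).
case: (leqP (Num.truncn (M * N%:R)).+1 N) => hc.
- exists (Num.truncn (M * N%:R)).+1; split => //.
  + left; rewrite ler_pdivlMr //; exact: ltW.
  + rewrite ler_pdivrMr // mulrDl mulVf ?gt_eqF //.
    by move: h1; rewrite -natr1 => h1; lra.
- exists N; split => //.
  + by rewrite leqnn andbT.
  + by right.
  + rewrite mulfV ?gt_eqF //.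
    have : N%:R <= M * N%:R :> R.
      apply: le_trans h1; rewrite ler_nat; lia.
    have hi : 0 < (N%:R : R)^-1 by rewrite invr_gt0.
    move=> h; have : 1 <= M by rewrite -(ler_pM2r hN') mul1r.
    lra.
Qed.

Lemma batch_cmp {R : realType} N (v m : nat -> R) T s e :
  (0 < N)%N -> data_ok T v m -> (e <= T)%N ->
  exists c, (1 <= c <= N)%N /\
  \sum_(s <= t < e.-1) (- xr N c (v t) (m t)) <=
  (e.-1 - s)%:R * (2 * \sum_(s.+1 <= w < e.-1) `|m w - m w.-1| + N%:R^-1).
Proof.
move=> hN hd heT.
case: (leqP e.-1 s) => hse.
  exists 1%N; split; first by rewrite leqnn.
  rewrite big_geq // (_ : (e.-1 - s)%N = 0%N); last by lia.
  by rewrite mul0r.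
set W := \sum_(s.+1 <= w < e.-1) _.
have W0 : 0 <= W by apply: sumr_ge0.
have [hvs hms] := hd s ltac:(lia).
have hM : 0 <= m s + W by move: hms => /andP[a b]; lra.
have [c [hc hcl hcu]] := level_idx N (m s + W) hN hM.
exists c; split => //.
have hN' : (0 : R) < N%:R by rewrite ltr0n.
have hW : forall t, (s <= t < e.-1)%N -> `|m t - m s| <= W.
  move=> t /andP[h1 h2].
  have := telesc m s (t - s); rewrite subnKC // => h.
  apply: le_trans h _; apply: sum_mono_hi => // i; exact: normr_ge0.
apply: le_trans (_ : _ <= \sum_(s <= t < e.-1) (2 * W + N%:R^-1)) _.
  apply: ler_sum_nat => t ht.
  have [hvt hmt] := hd t ltac:(lia).
  have := hW t ht; rewrite ler_norml => /andP[a b].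
  have hcm : m t <= c%:R / N%:R.
    case: hcl => [h|->]; first lra.
    rewrite mulfV ?gt_eqF //; by move: hmt => /andP[].
  have := xr_cmp N c (v t) (m t) hvt ltac:(by move: hmt => /andP[]) hcm.
  lra.
rewrite sumr_const_nat; rewrite (mulr_natl (2 * W + N%:R^-1) (e.-1 - s)); exact: lexx.
Qed.

Lemma batch_bound {R : realType} N (v m : nat -> R) (rs : nat -> bool) T s e :
  (0 < N)%N -> data_ok T v m -> (s < e)%N -> (e <= T)%N -> (s = 0%N \/ rs s) ->
  (forall t, (s < t < e)%N -> ~~ rs t) ->
  \sum_(s <= t < e) (opt_reward (v t) (m t) - exp_reward_t N (2^-1) v m rs t)
  <= 2 * ln N%:R + 1 + 2 * ((e.-1 - s)%:R *
       (2 * \sum_(s.+1 <= w < e.-1) `|m w - m w.-1| + N%:R^-1)).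
Proof.
move=> hN hd hse heT hs hnr.
have [c [hc hcmp]] := batch_cmp N v m T s e hN hd heT.
apply: le_trans (batch_prod N v m rs T s e c hN hd hse heT hs hnr hc) _.
lra.
Qed.

Lemma batch_induction {R : realType} (T : nat) (rs : nat -> bool) (f B : nat -> R) :
  (forall s e, (s < e)%N -> (e <= T)%N -> (s = 0%N \/ rs s) -> (rs e || (e == T)) ->
     (forall t, (s < t < e)%N -> ~~ rs t) -> \sum_(s <= t < e) f t <= B s - B e) ->
  0 <= B T ->
  \sum_(0 <= t < T) f t <= B 0%N.
Proof.
move=> hb hBT.
suff H : forall n s, (T - s <= n)%N -> (s <= T)%N -> (s = 0%N \/ rs s \/ s = T) ->
  \sum_(s <= t < T) f t <= B s.
  by apply: (H T); [lia|lia|left].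
elim=> [|n IH] s hn hsT hs.
  have -> : s = T by lia.
  by rewrite big_geq.
case: (eqVneq s T) => [->|hneq]; first by rewrite big_geq.
have hs' : s = 0%N \/ rs s by case: hs => [h|[h|h]]; [left|right|move/eqP: hneq].
have exP : exists e, (s < e)%N && (rs e || (e == T)).
  by exists T; rewrite eqxx orbT andbT; lia.
case: (ex_minnP exP) => e /andP[hse hre] hmin.
have heT : (e <= T)%N.
  by apply: hmin; rewrite eqxx orbT andbT; lia.
have hnr : forall t, (s < t < e)%N -> ~~ rs t.
  move=> t /andP[h1 h2]; apply/negP => hr.
  have := hmin t; rewrite h1 hr /= => /(_ isT); lia.
rewrite (big_cat_nat (n := e)) /=; [|lia|lia].
have := hb s e hse heT hs' hre hnr.
have := IH e ltac:(lia) heT ltac:(by case/orP: hre => [->|/eqP ->]; [right; left|right; right]).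
lra.
Qed.

Lemma regret_sum {R : realType} T N (eta : R) v m rs :
  exp_dyn_regret T N eta v m rs =
  \sum_(0 <= t < T) (opt_reward (v t) (m t) - exp_reward_t N eta v m rs t).
Proof. by rewrite /exp_dyn_regret -sumrB big_mkord. Qed.

Lemma regret_master {R : realType} N (v m : nat -> R) (rs : nat -> bool) T (lam : R) (X : nat -> R) :
  (0 < N)%N -> data_ok T v m -> 0 < lam ->
  (forall s e, (s < e)%N -> (e < T)%N -> (s = 0%N \/ rs s) -> rs e ->
     (forall t, (s < t < e)%N -> ~~ rs t) -> lam <= (e - s)%:R) ->
  (forall s e, (s < e)%N -> (e <= T)%N -> (s = 0%N \/ rs s) -> (rs e || (e == T)) ->
     (forall t, (s < t < e)%N -> ~~ rs t) ->
     4 * ((e.-1 - s)%:R * \sum_(s.+1 <= w < e.-1) `|m w - m w.-1|) <= X s - X e) ->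
  0 <= X T ->
  exp_dyn_regret T N (2^-1) v m rs <=
  (2 * ln N%:R + 1) * (T%:R / lam + 1) + X 0%N + 2 * T%:R / N%:R.
Proof.
move=> hN hd hlam hlen hX hXT.
have lnN : 0 <= ln (N%:R : R) by apply: ln_ge0; rewrite ler1n.
have hN' : (0 : R) < N%:R by rewrite ltr0n.
set B := fun s : nat => (2 * ln N%:R + 1) * ((T - s)%:R / lam + (if (s < T)%N then 1 else 0))
   + X s + 2 * (T - s)%:R / N%:R.
apply: le_trans (_ : _ <= B 0%N) _; last first.
  rewrite /B /= subn0; case: (posnP T) => [->|hT]; last exact: lexx.
  rewrite /= !mul0r mulr0; lra.
rewrite regret_sum; apply: batch_induction; last first.
  rewrite /B /= subnn ltnn !mul0r ?mulr0; lra.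
move=> s e hse heT hs hre hnr.
apply: le_trans (batch_bound N v m rs T s e hN hd hse heT hs hnr) _.
have hXse := hX s e hse heT hs hre hnr.
rewrite /B.
have hsub : (T - s)%N = ((T - e) + (e - s))%N by lia.
rewrite hsub natrD.
set a := (T - e)%:R.
have hK : ((e.-1 - s)%:R : R) <= (e - s)%:R by rewrite ler_nat; lia.
have hK0 : (0 : R) <= (e.-1 - s)%:R by [].
have hsT : (s < T)%N by lia.
rewrite hsT.
have hfirst : 1 <= ((a + (e - s)%:R) / lam + 1) - (a / lam + (if (e < T)%N then 1 else 0)).
  case: (ltnP e T) => heT'.
  - have hr : rs e by case/orP: hre => // /eqP h; lia.
    have := hlen s e hse heT' hs hr hnr.
    rewrite mulrDl; move=> h.
    have : 1 <= (e - s)%:R / lam by rewrite ler_pdivlMr // mul1r.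
    lra.
  - rewrite mulrDl.
    have : 0 <= (e - s)%:R / lam by apply: divr_ge0 => //; exact: ltW.
    lra.
have hlast : 2 * ((e.-1 - s)%:R * N%:R^-1) <= 2 * (a + (e - s)%:R) / N%:R - 2 * a / N%:R.
  have -> : 2 * (a + (e - s)%:R) / N%:R - 2 * a / N%:R = 2 * ((e - s)%:R * N%:R^-1) by ring.
  apply: ler_wpM2l => //; apply: ler_wpM2r => //; by rewrite invr_ge0; exact: ltW.
set L := 2 * ln N%:R + 1.
have hL : 0 <= L by rewrite /L; lra.
set F := (_ / lam + 1) in hfirst *.
set G := (_ + (if _ then _ else _)) in hfirst *.
have : L <= L * F - L * G.
  rewrite -mulrBr; rewrite -[X in X <= _]mulr1; apply: ler_wpM2l => //.
move: hXse hlast; set W := \sum_(s.+1 <= w < e.-1) _.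
set K := (e.-1 - s)%:R.
move=> h1 h2 h3.
have -> : 2 * (K * (2 * W + N%:R^-1)) = 4 * (K * W) + 2 * (K * N%:R^-1) by ring.
lra.
Qed.

Lemma sq_le {R : realType} (u w : R) : 0 <= w -> u ^+ 2 <= w ^+ 2 -> u <= w.
Proof. move=> hw h; rewrite !expr2 in h; nra. Qed.

Lemma X_facts {R : realType} (T V : R) : 0 <= T -> 0 <= V ->
  1 <= Num.max (Num.sqrt (T * V)) 1 /\
  T * V <= (Num.max (Num.sqrt (T * V)) 1) ^+ 2.
Proof.
move=> hT hV; set X := Num.max _ _.
have [h1 [h2 _]] := max_facts (Num.sqrt (T * V)) 1.
split => //.
have hs : Num.sqrt (T * V) ^+ 2 = T * V by rewrite sqr_sqrtr // mulr_ge0.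
have h0 := sqrtr_ge0 (T * V).
rewrite -hs !expr2; apply: ler_pM => //.
Qed.

Lemma q_facts {R : realType} (T V : R) : 0 < T -> 0 <= V ->
  let X := Num.max (Num.sqrt (T * V)) 1 in
  let q := Num.sqrt (T / (V + T^-1)) in
  [/\ 0 < q, T <= 2 * X * q, q * V <= X & Num.sqrt T * Num.sqrt (V + T^-1) <= 2 * X].
Proof.
move=> hT hV X q.
have [hX1 hX2] := X_facts T V (ltW hT) hV; rewrite -/X in hX1 hX2.
have hTi : 0 < T^-1 by rewrite invr_gt0.
set z := V + T^-1.
have hz : 0 < z by rewrite /z; lra.
have hTz : T * z = T * V + 1 by rewrite /z mulrDr mulfV ?gt_eqF.
set Y := T / z.
have hY : 0 < Y by rewrite /Y divr_gt0.
have hYz : Y * z = T by rewrite /Y -mulrA mulVf ?gt_eqF // mulr1.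
have hq2 : q ^+ 2 = Y by rewrite /q sqr_sqrtr // ltW.
have hq : 0 < q by rewrite /q sqrtr_gt0.
have hX3 : 1 <= X ^+ 2 by rewrite expr2; nra.
split => //.
- apply: sq_le; first by apply: mulr_ge0 => //; lra.
  rewrite exprMn hq2.
  have h4 : T * z <= 4 * X ^+ 2 by rewrite hTz; lra.
  have : T ^+ 2 = Y * (T * z) by rewrite -hYz; ring.
  move=> ->; rewrite mulrC; apply: ler_wpM2r; first exact: ltW.
  by move: h4; rewrite !expr2; lra.
- apply: sq_le; first lra.
  rewrite exprMn hq2.
  have : Y * V ^+ 2 <= Y * (V * z) by apply: ler_wpM2l; [exact: ltW| rewrite expr2; apply: ler_wpM2l => //; rewrite /z; lra].
  have -> : Y * (V * z) = T * V by rewrite -hYz; ring.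
  rewrite mulrC; lra.
- apply: sq_le; first lra.
  rewrite exprMn !sqr_sqrtr ?ltW // -/z hTz.
  have -> : (2 * X) ^+ 2 = 4 * X ^+ 2 by ring.
  lra.
Qed.

Lemma lnT_ge {R : realType} (T : nat) : (2 <= T)%N -> 2^-1 <= ln (T%:R : R).
Proof.
move=> hT.
have hT' : (2 : R) <= T%:R by rewrite (ler_nat R 2 T).
have hp : (0 : R) < T%:R by lra.
have h : ln (T%:R^-1 : R) <= T%:R^-1 - 1 by apply: ln_le_sub1; rewrite invr_gt0.
rewrite lnV ?posrE // in h.
have : T%:R^-1 <= (2 : R)^-1 by rewrite lef_pV2 ?posrE //; lra.
lra.
Qed.

Lemma W_split {R : realType} (F : nat -> R) T s e : (s < e)%N -> (e <= T)%N ->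
  (forall i, 0 <= F i) ->
  \sum_(s.+1 <= w < e.-1) F w <= \sum_(s.+1 <= w < T) F w - \sum_(e.+1 <= w < T) F w.
Proof.
move=> hse heT hF.
case: (ltnP e T) => he.
- have h1 : (s.+1 <= e.+1)%N by apply: ltnW.
  rewrite (big_cat_nat h1 he) /=.
  rewrite addrK; apply: sum_mono_hi => //.
  apply: leq_trans (leq_pred e) _; exact: leqnSn.
- rewrite (big_geq (m := e.+1)); last exact: (leq_trans he).
  rewrite subr0; apply: sum_mono_hi => //.
  apply: leq_trans (leq_pred e) _; exact: heT.
Qed.

Lemma fixed_start (D s : nat) : (s = 0%N \/ fixed_restart D s) -> (s %% D = 0)%N.
Proof. by rewrite /fixed_restart; case => [->|/eqP //]; rewrite mod0n. Qed.

Lemma fixed_len (D s e : nat) : (0 < D)%N -> (s < e)%N ->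
  (s = 0%N \/ fixed_restart D s) -> fixed_restart D e -> (D <= e - s)%N.
Proof.
move=> hD hse hs he.
have hs' := fixed_start D s hs.
have he' : (e %% D = 0)%N by move/eqP: he.
apply: dvdn_leq; first by rewrite subn_gt0.
by rewrite dvdn_sub // /dvdn ?hs' ?he'.
Qed.

Lemma fixed_K (D s e : nat) : (0 < D)%N -> (s = 0%N \/ fixed_restart D s) ->
  (forall t, (s < t < e)%N -> ~~ fixed_restart D t) -> (e <= s + D)%N.
Proof.
move=> hD hs hnr; have hs' := fixed_start D s hs.
rewrite leqNgt; apply/negP => hlt.
have h1 : (s < s + D)%N by rewrite -{1}(addn0 s) ltn_add2l.
have := hnr (s + D)%N; rewrite h1 hlt /= => /(_ isT).
by rewrite /fixed_restart modnDr hs'.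
Qed.

Lemma final_arith {R : realType} (y X P Q al b : R) :
  2^-1 <= y -> 1 <= X -> 0 <= P -> P <= 2 * al * X -> 0 <= al -> 0 <= b ->
  0 <= Q -> Q <= b * X ->
  (2 * y + 1) * (P + 1) + 4 * Q + 2 <= (8 * al + 8 * b + 8) * y ^+ 1 * X.
Proof.
move=> hy hX hP hPa hal hb hQ hQb.
rewrite expr1.
have h1 : (2 * y + 1) * (P + 1) <= (4 * y) * ((2 * al + 1) * X).
  apply: ler_pM; [lra|lra|lra|nra].
have h2 : b * X <= 2 * b * y * X.
  have : 0 <= b * X by apply: mulr_ge0 => //; lra.
  move=> h; have : b * X * 1 <= b * X * (2 * y) by apply: ler_wpM2l => //; lra.
  rewrite mulr1 => h'; lra.
have h3 : 1 <= 2 * y * X.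
  have : 1 * 1 <= (2 * y) * X by apply: ler_pM; lra.
  by rewrite mul1r.
have -> : (8 * al + 8 * b + 8) * y * X = 4 * y * ((2 * al + 1) * X) + 4 * (2 * b * y * X) + 2 * (2 * y * X) by ring.
lra.
Qed.

Lemma part1_T {R : realType} (T D : nat) (VT a b : R) (v m : nat -> R) :
  (2 <= T)%N -> 0 < a -> a <= b -> (0 < D)%N -> 0 <= VT ->
  a * Num.sqrt (T%:R / (VT + T%:R^-1)) <= D%:R <= b * Num.sqrt (T%:R / (VT + T%:R^-1)) ->
  in_class VT T v m ->
  restarted_prod_regret T D v m <=
  (8 * a^-1 + 8 * b + 8) * (ln T%:R) ^+ 1 * Num.max (Num.sqrt (T%:R * VT)) 1.
Proof.
move=> hT ha hab hD hV /andP[hDa hDb] [hd hvar].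
have hT0 : (0 < T)%N by apply: leq_trans hT.
have hTr : (0 : R) < T%:R by rewrite ltr0n.
have hDr : (0 : R) < D%:R by rewrite ltr0n.
set W := fun s : nat => \sum_(s.+1 <= w < T) `|m w - m w.-1|.
have hW0 : forall s, 0 <= W s by move=> s; apply: sumr_ge0.
have hreg : restarted_prod_regret T D v m <= (2 * ln T%:R + 1) * (T%:R / D%:R + 1) + 4 * D%:R * W 0%N + 2 * T%:R / T%:R.
  apply: (@regret_master R T v m (fixed_restart D) T D%:R (fun s => 4 * D%:R * W s) hT0 hd hDr).
- move=> s e hse heT hs hr hnr; rewrite ler_nat; exact: fixed_len.
- move=> s e hse heT hs hre hnr.
  have hK : ((e.-1 - s)%:R : R) <= D%:R.
    rewrite ler_nat; have := fixed_K D s e hD hs hnr; lia.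
  have hWs := W_split (fun w => `|m w - m w.-1|) T s e hse heT (fun i => normr_ge0 _).
  rewrite -/(W s) in hWs.
  set Wb := \sum_(s.+1 <= w < e.-1) _ in hWs *.
  have hWb : 0 <= Wb by apply: sumr_ge0.
  have : (e.-1 - s)%:R * Wb <= D%:R * (W s - W e).
    apply: ler_pM => //.
  lra.
- by rewrite mulr_ge0 // mulr_ge0.
apply: le_trans hreg _.
have -> : 2 * T%:R / T%:R = 2 :> R by rewrite -mulrA mulfV ?gt_eqF // mulr1.
have [hq hTq hqV hsq] := q_facts T%:R VT hTr hV.
set q := Num.sqrt _ in hq hTq hqV hsq hDa hDb.
set X := Num.max _ _ in hq hTq hqV hsq *.
have [hX1 _] := X_facts T%:R VT (ltW hTr) hV; rewrite -/X in hX1.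
have hy := lnT_ge T hT.
have hW0V : W 0%N <= VT by [].
rewrite -[4 * D%:R * _]mulrA.
apply: (final_arith (ln T%:R) X (T%:R / D%:R) (D%:R * W 0%N) a^-1 b) => //.
- by apply: divr_ge0; apply: ltW.
- rewrite ler_pdivrMr //.
  have : 2 * X * q <= 2 * a^-1 * X * D%:R.
    have -> : 2 * X * q = 2 * a^-1 * X * (a * q) by field; rewrite gt_eqF.
    apply: ler_wpM2l => //; apply: mulr_ge0; [apply: mulr_ge0 => //; rewrite invr_ge0; exact: ltW|lra].
  lra.
- by rewrite invr_ge0 ltW.
- lra.
- by apply: mulr_ge0; [exact: ltW|].
- have h1 : D%:R * W 0%N <= D%:R * VT by apply: ler_wpM2l => //; exact: ltW.
  have h2 : D%:R * VT <= b * q * VT by apply: ler_wpM2r.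
  have h3 : b * q * VT <= b * X by rewrite -mulrA; apply: ler_wpM2l => //; lra.
  lra.
Qed.

Definition arL {R : realType} T (m : nat -> R) t := (ar_state T m t).1.1.
Definition arS {R : realType} T (m : nat -> R) t :=
  \sum_(0 <= u < t) (if ar_restart T m u then 0 else `|m u - m u.-1|).

Lemma ar_restart0 {R : realType} T (m : nat -> R) : ar_restart T m 0.
Proof. by []. Qed.

Lemma ar_stepE {R : realType} T (m : nat -> R) t :
  let: (L, Vc, Vp) := ar_state T m t in
  let Vc' := if L == 0%N then Vc else Vc + `|m t - m t.-1| in
  ar_state T m t.+1 =
    if (L.+1)%:R < Num.sqrt (T%:R / (Vp + Vc' + T%:R^-1))
    then (L.+1, Vc', Vp) else (0%N, 0, Vp + Vc').
Proof. by rewrite /=; case: (ar_state T m t) => [[L Vc] Vp]. Qed.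

Lemma ar_sum {R : realType} T (m : nat -> R) t :
  (ar_state T m t).2 + (ar_state T m t).1.2 = arS T m t.
Proof.
elim: t => [|t IH]; first by rewrite /arS big_geq //= addr0.
rewrite /arS big_nat_recr //= -/(arS T m t) -IH /ar_restart.
case: (ar_state T m t) => [[L Vc] Vp] /=.
case: ifP => _ /=; case: (L == 0%N) => /=; lra.
Qed.

Lemma ar_cont {R : realType} T (m : nat -> R) t : ~~ ar_restart T m t.+1 ->
  arL T m t.+1 = (arL T m t).+1 /\
  ((arL T m t).+1)%:R < Num.sqrt (T%:R / (arS T m t.+1 + T%:R^-1)).
Proof.
rewrite -ar_sum /ar_restart /arL.
have := ar_stepE T m t.
case: (ar_state T m t) => [[L Vc] Vp] /= ->.
by case: ifP => h //=; rewrite addrA.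
Qed.

Lemma ar_reset {R : realType} T (m : nat -> R) t : ar_restart T m t.+1 ->
  Num.sqrt (T%:R / (arS T m t.+1 + T%:R^-1)) <= ((arL T m t).+1)%:R.
Proof.
rewrite -ar_sum /ar_restart /arL.
have := ar_stepE T m t.
case: (ar_state T m t) => [[L Vc] Vp] /= ->.
case: ifP => h //=; rewrite addr0; move/negbT: h; by rewrite -leNgt.
Qed.

Lemma sqrt_key {R : realType} (T A W c K : R) : 0 < T -> 0 <= A -> 0 <= W -> 0 < c ->
  0 <= K -> K <= Num.sqrt (T / (A + W + c)) ->
  K * W <= 2 * Num.sqrt T * (Num.sqrt (A + W + c) - Num.sqrt (A + c)).
Proof.
move=> hT hA hW hc hK hKr.
set r := Num.sqrt (T / (A + W + c)).
set u := Num.sqrt (A + W + c).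
set w := Num.sqrt (A + c).
have hr0 : 0 <= r := sqrtr_ge0 _.
have hu2 : u ^+ 2 = A + W + c by rewrite sqr_sqrtr //; lra.
have hw2 : w ^+ 2 = A + c by rewrite sqr_sqrtr //; lra.
have hr2 : r ^+ 2 = T / (A + W + c) by rewrite sqr_sqrtr // divr_ge0 //; lra.
have hu0 : 0 < u by rewrite sqrtr_gt0; lra.
have hw0 : 0 <= w := sqrtr_ge0 _.
have hwu : w <= u by rewrite ler_sqrt; lra.
have hru : r * u = Num.sqrt T.
  have : (r * u) ^+ 2 = T by rewrite exprMn hr2 hu2 -mulrA mulVf ?mulr1 // gt_eqF //; lra.
  move=> h; rewrite -h sqrtr_sqr ger0_norm //; exact: mulr_ge0 (ltW hu0).
have hWe : W = (u - w) * (u + w) by rewrite -subr_sqr hu2 hw2; ring.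
have h1 : K * W <= r * W by apply: ler_wpM2r.
have h2 : r * W <= r * ((u - w) * (2 * u)).
  rewrite hWe; apply: ler_wpM2l => //; apply: ler_wpM2l; lra.
have -> : 2 * Num.sqrt T * (u - w) = r * ((u - w) * (2 * u)) by rewrite -hru; ring.
lra.
Qed.

Lemma ar_batchL {R : realType} T (m : nat -> R) s e :
  (s = 0%N \/ ar_restart T m s) -> (forall t, (s < t < e)%N -> ~~ ar_restart T m t) ->
  forall j, (s + j < e)%N -> arL T m (s + j)%N = j.
Proof.
move=> hs hnr; elim=> [|j IH] hj.
  rewrite addn0; case: hs => [->|] //; by rewrite /ar_restart /arL => /eqP.
have hj' : (s + j < e)%N by apply: leq_trans hj; rewrite addnS.
have hin : (s < (s + j).+1 < e)%N by rewrite ltnS leq_addr /= -addnS.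
have [h _] := ar_cont T m (s + j) (hnr (s + j).+1 hin).
by rewrite addnS h IH.
Qed.

Lemma arS_mono {R : realType} T (m : nat -> R) a b : (a <= b)%N -> arS T m a <= arS T m b.
Proof.
move=> hab; apply: sum_mono_hi => // i; case: ifP => _ //; exact: normr_ge0.
Qed.

Lemma arS_ge0 {R : realType} T (m : nat -> R) a : 0 <= arS T m a.
Proof. apply: sumr_ge0 => i _; case: ifP => _ //; exact: normr_ge0. Qed.

Lemma arS_le {R : realType} T (m : nat -> R) :
  arS T m T <= \sum_(1 <= u < T) `|m u - m u.-1|.
Proof.
rewrite /arS; case: (posnP T) => [->|hT]; first by rewrite !big_geq.
rewrite big_ltn // ar_restart0 add0r; apply: ler_sum_nat => i _.
case: ifP => _ //; exact: normr_ge0.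
Qed.

Lemma arS_batch {R : realType} T (m : nat -> R) s e :
  (s = 0%N \/ ar_restart T m s) -> (forall t, (s < t < e)%N -> ~~ ar_restart T m t) ->
  (s < e.-1)%N ->
  arS T m e.-1 = arS T m s + \sum_(s.+1 <= w < e.-1) `|m w - m w.-1|.
Proof.
move=> hs hnr hse.
have hrs : ar_restart T m s by case: hs => [->|].
rewrite /arS (big_cat_nat (n := s) (m := 0%N)) //=; last exact: ltnW.
congr (_ + _); rewrite big_ltn // hrs add0r.
apply: eq_big_nat => i /andP[h1 h2].
by rewrite (negbTE (hnr i _)) //; rewrite h1 /=; apply: leq_trans h2 (leq_pred e).
Qed.

Lemma nat1 (s e : nat) : (s < e)%N ->
  [/\ (s + (e.-1 - s) = e.-1)%N, (e.-1 < e)%N, ((e.-1 - s).+1 = e - s)%N & e = (e.-1).+1].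
Proof. move=> h; split; lia. Qed.

Lemma nat2 (s e : nat) : (s < e.-1)%N ->
  [/\ (s + ((e.-1).-1 - s) = (e.-1).-1)%N, ((e.-1).-1 < e)%N,
      (((e.-1).-1 - s).+1 = e.-1 - s)%N, e.-1 = (e.-1).-1.+1 & (s < e.-1 < e)%N].
Proof. move=> h; split; lia. Qed.

Lemma nat3 (s e : nat) : (e.-1 <= s)%N -> (e.-1 - s = 0)%N.
Proof. move=> h; lia. Qed.

Lemma part2_T {R : realType} (T : nat) (VT : R) (v m : nat -> R) :
  (2 <= T)%N -> 0 <= VT -> in_class VT T v m ->
  ar_prod_regret T v m <=
  (8 * 1^-1 + 8 * 4 + 8) * (ln T%:R) ^+ 1 * Num.max (Num.sqrt (T%:R * VT)) 1.
Proof.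
move=> hT hV [hd hvar].
have hT0 : (0 < T)%N by apply: leq_trans hT.
have hTr : (0 : R) < T%:R by rewrite ltr0n.
have hc : (0 : R) < T%:R^-1 by rewrite invr_gt0.
set c := T%:R^-1 in hc.
set rs := ar_restart T m.
have [hq hTq hqV hsq] := q_facts T%:R VT hTr hV.
set q := Num.sqrt _ in hq hTq hqV hsq.
set X := Num.max _ _ in hq hTq hqV hsq *.
have hSV : arS T m T <= VT by apply: le_trans (arS_le T m) _.
set Y := fun s : nat => 8 * Num.sqrt T%:R * (Num.sqrt (arS T m T + c) - Num.sqrt (arS T m s + c)).
have hreg : ar_prod_regret T v m <= (2 * ln T%:R + 1) * (T%:R / q + 1) + Y 0%N + 2 * T%:R / T%:R.
  apply: (@regret_master R T v m rs T q Y hT0 hd hq).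
  - move=> s e hse heT hs hr hnr.
    have [n1 n2 n3 he] := nat1 s e hse.
    have := ar_reset T m e.-1; rewrite -he => /(_ hr).
    have hL := ar_batchL T m s e hs hnr (e.-1 - s).
    rewrite n1 in hL; rewrite (hL n2) n3.
    apply: le_trans; rewrite /q ler_sqrt; last by apply: divr_ge0; [exact: ltW|apply: addr_ge0; [exact: arS_ge0|exact: ltW]].
    apply: ler_wpM2l; first exact: ltW.
    have h1 : 0 < arS T m e + c by have := arS_ge0 T m e; lra.
    have h2 : 0 < VT + c by lra.
    rewrite lef_pV2 ?posrE //.
    have := arS_mono T m e T (ltnW heT); lra.
  - move=> s e hse heT hs hre hnr.
    have hYe : Y s - Y e = 8 * Num.sqrt T%:R * (Num.sqrt (arS T m e + c) - Num.sqrt (arS T m s + c)).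
      by rewrite /Y; ring.
    rewrite hYe.
    have hmono : Num.sqrt (arS T m s + c) <= Num.sqrt (arS T m e + c).
      rewrite ler_sqrt; last by have := arS_ge0 T m e; lra.
      have := arS_mono T m s e (ltnW hse); lra.
    have hsT := sqrtr_ge0 (T%:R : R).
    case: (leqP e.-1 s) => hes.
      rewrite (nat3 s e hes).
      rewrite mul0r mulr0; apply: mulr_ge0; [lra|lra].
    set Wb := \sum_(s.+1 <= w < e.-1) _.
    have hWb : 0 <= Wb by apply: sumr_ge0.
    have hSe1 := arS_batch T m s e hs hnr hes.
    have [n1 n2 n3 he1 hin] := nat2 s e hes.
    have hnr1 : ~~ ar_restart T m (e.-1).-1.+1 by rewrite -he1; exact: hnr _ hin.
    have [_ hK] := ar_cont T m (e.-1).-1 hnr1.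
    have hL := ar_batchL T m s e hs hnr ((e.-1).-1 - s).
    rewrite n1 in hL; rewrite (hL n2) -he1 n3 in hK.
    rewrite hSe1 in hK.
    have := sqrt_key T%:R (arS T m s) Wb c (e.-1 - s)%:R hTr (arS_ge0 T m s) hWb hc (ler0n _ _) (ltW hK).
    rewrite -hSe1.
    have : Num.sqrt (arS T m e.-1 + c) <= Num.sqrt (arS T m e + c).
      rewrite ler_sqrt; last by have := arS_ge0 T m e; lra.
      have := arS_mono T m e.-1 e (leq_pred e); lra.
    move=> h1 h2.
    have : 2 * Num.sqrt T%:R * (Num.sqrt (arS T m e.-1 + c) - Num.sqrt (arS T m s + c)) <=
           2 * Num.sqrt T%:R * (Num.sqrt (arS T m e + c) - Num.sqrt (arS T m s + c)).
      apply: ler_wpM2l; lra.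
    lra.
  - by rewrite /Y subrr mulr0.
apply: le_trans hreg _.
have -> : 2 * T%:R / T%:R = 2 :> R by rewrite -mulrA mulfV ?gt_eqF // mulr1.
have [hX1 _] := X_facts T%:R VT (ltW hTr) hV; rewrite -/X in hX1.
have hy := lnT_ge T hT.
have hY0 : 0 <= Y 0%N.
  rewrite /Y; apply: mulr_ge0; first by apply: mulr_ge0 => //; exact: sqrtr_ge0.
  rewrite subr_ge0 ler_sqrt; last by have := arS_ge0 T m T; lra.
  have := arS_mono T m 0 T (leq0n T); lra.
have hY0X : Y 0%N <= 16 * X.
  rewrite /Y.
  have h1 : Num.sqrt (arS T m T + c) - Num.sqrt (arS T m 0 + c) <= Num.sqrt (VT + c).
    have := sqrtr_ge0 (arS T m 0 + c).
    have : Num.sqrt (arS T m T + c) <= Num.sqrt (VT + c) by rewrite ler_sqrt; lra.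
    lra.
  have h2 : 8 * Num.sqrt T%:R * (Num.sqrt (arS T m T + c) - Num.sqrt (arS T m 0 + c)) <=
            8 * Num.sqrt T%:R * Num.sqrt (VT + c).
    apply: ler_wpM2l => //; apply: mulr_ge0 => //; exact: sqrtr_ge0.
  rewrite /c in h2; lra.
have -> : Y 0%N = 4 * (Y 0%N / 4) by field.

apply: (final_arith (ln T%:R) X (T%:R / q) (Y 0%N / 4) 1^-1 4); rewrite ?invr1.
all: try lra.
- exact: hy.
- by apply: divr_ge0; apply: ltW.
- rewrite ler_pdivrMr //; lra.
Qed.

Theorem theorem1 (R : realType) (V : nat -> R) :
  (forall T, 0 <= V T) ->
  (* V_T = o(T) *)
  (forall e : R, 0 < e -> exists T0 : nat, forall T : nat, (T0 <= T)%N -> V T <= e * T%:R) ->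
  (* (i) V_T known: constant batch size Delta_T of order sqrt(T / V_T) *)
  (forall (a b : R) (Delta : nat -> nat),
      0 < a -> a <= b ->
      (forall T, (0 < Delta T)%N) ->
      (forall T, (0 < T)%N ->
         a * Num.sqrt (T%:R / (V T + T%:R^-1)) <= (Delta T)%:R <=
         b * Num.sqrt (T%:R / (V T + T%:R^-1))) ->
      exists (C : R) (k : nat) (T0 : nat),
        forall T : nat, (T0 <= T)%N ->
        forall v m : nat -> R, in_class (V T) T v m ->
          restarted_prod_regret T (Delta T) v m
            <= C * (ln T%:R) ^+ k * Num.max (Num.sqrt (T%:R * V T)) 1)
  /\
  (* (ii) V_T unknown: AR-Prod *)
  (exists (C : R) (k : nat) (T0 : nat),
      forall T : nat, (T0 <= T)%N ->
      forall v m : nat -> R, in_class (V T) T v m ->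
        ar_prod_regret T v m <= C * (ln T%:R) ^+ k * Num.max (Num.sqrt (T%:R * V T)) 1).
Proof.
move=> hV0 _; split.
- move=> a b Delta ha hab hD hbnd.
  exists (8 * a^-1 + 8 * b + 8), 1%N, 2%N => T hT v m hc.
  apply: part1_T => //; apply: hbnd; exact: leq_trans hT.
- exists (8 * 1^-1 + 8 * 4 + 8), 1%N, 2%N => T hT v m hc.
  exact: part2_T.
Qed.
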